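(* Let $N\ge1$, $q,p,r,s\in\mathbb{C}\setminus\{0\}$ with $q^2\ne1$, $r^2\neq1$. Then $K(\lambda):=K^{\mathrm{tr}}(\lambda,r,s)$ is a solution of the reflection equation for $R(\lambda):=R^{\mathrm{tr}}(\lambda,q,p)$: $$R_{12}(\lambda-\mu)K_1(\lambda)R_{21}(\lambda+\mu)K_2(\mu)=K_2(\mu)R_{12}(\lambda+\mu)K_1(\lambda)R_{21}(\lambda-\mu)$$ for all $\lambda,\mu\in\mathbb{C}$ at which all entries are defined.
   Context: $V=\mathbb{C}^N$ with basis $e_0,\dots,e_{N-1}$; for $A\in\mathrm{End}(V)$, $Ae_j=\sum_k e_k[A]_j^k$; for $R\in\mathrm{End}(V\otimes V)$, $R(e_i\otimes e_j)=\sum_{k,l}[R]_{ij}^{kl}e_k\otimes e_l$. $P$ is the flip, $R_{12}=R$, $R_{21}=PRP$, $K_1=K\otimes I$, $K_2=I\otimes K$. Cremmer–Gervais $R$-matrix with $z=e^{\pi i\lambda}$: $[R^{\mathrm{tr}}(\lambda,q,p)]_{ij}^{kl}=p^{2(j-k)}\times$ - $\frac{qz^{-1}-q^{-1}z}{(q-q^{-1})(z-z^{-1})}$ if $i=j=k=l$; - $-\frac{q^{\mathrm{sgn}(i-j)}}{q-q^{-1}}$ if $i=k\neq j=l$; - $\frac{z^{\mathrm{sgn}(j-i)}}{z-z^{-1}}$ if $l=i\ne k=j$; - $\mathrm{sgn}(j-i)$ if $\min(i,j)<k<\max(i,j)$ and $i+j=k+l$; - $0$ otherwise. $K$-matrix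 with $z=e^{\pi i\lambda}$: $[K^{\mathrm{tr}}(\lambda,r,s)]_j^k=s^{j-k}c_{jk}$ where $c_{jk}=\frac{r^{-1}z^{-2}-rz^2}{(r-r^{-1})(z^2-z^{-2})}$ if $j=k=(N-1)/2$; $c_{jk}=-\frac{z^{2\,\mathrm{sgn}(2j-N+1)}}{z^2-z^{-2}}$ if $j=k\ne(N-1)/2$; $c_{jk}=-\frac{r^{\mathrm{sgn}(2j-N+1)}}{r-r^{-1}}$ if $k=N-1-j\neq j$; $c_{jk}=\mathrm{sgn}(N-1-2j)$ if $\min(j,N-1-j)<k<\max(j,N-1-j)$; $c_{jk}=0$ otherwise. *)

(* Defs.v *)
From HB Require Import structures.
From mathcomp Require Import all_boot all_order all_algebra.
Set Implicit Arguments. Unset Strict Implicit. Unset Printing Implicit Defensive.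
Import Order.TTheory GRing.Theory Num.Theory.
Local Open Scope ring_scope.

(* Endomorphisms of V = C^N are encoded by their entries:
   A : endo1 with A j k = [A]_j^k  (A e_j = sum_k e_k [A]_j^k).
   Endomorphisms of V (x) V: T : endo2 with T i j k l = [T]_{ij}^{kl}
   (T (e_i (x) e_j) = sum_{k,l} [T]_{ij}^{kl} e_k (x) e_l). *)
Definition endo1 (C : Type) (N : nat) := 'I_N -> 'I_N -> C.
Definition endo2 (C : Type) (N : nat) := 'I_N -> 'I_N -> 'I_N -> 'I_N -> C.

Definition comp2 (C : fieldType) (N : nat) (A B : endo2 C N) : endo2 C N :=
  fun i j m n => \sum_(k < N) \sum_(l < N) B i j k l * A k l m n.

Definition flip2 (C : fieldType) (N : nat) : endo2 C N :=
  fun i j k l => ((k == j) && (l == i))%:R.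

Definition op21 (C : fieldType) (N : nat) (R : endo2 C N) : endo2 C N :=
  comp2 (@flip2 C N) (comp2 R (@flip2 C N)).

Definition K1 (C : fieldType) (N : nat) (K : endo1 C N) : endo2 C N :=
  fun i j k l => K i k * (l == j)%:R.
Definition K2 (C : fieldType) (N : nat) (K : endo1 C N) : endo2 C N :=
  fun i j k l => (k == i)%:R * K j l.

Definition sgnC (C : fieldType) (x : int) : C := (sgz x)%:~R.

(* Cremmer-Gervais R-matrix R^tr(lambda,q,p), expressed through z = e^{pi i lambda} *)
Definition Rtr (C : fieldType) (N : nat) (z q p : C) : endo2 C N :=
  fun i j k l =>
    let I := (i : nat)%:Z in let J := (j : nat)%:Z in
    let Kk := (k : nat)%:Z in let L := (l : nat)%:Z in
    (p ^ ((J - Kk) * 2)) *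
    (if [&& i == j, j == k & k == l] then
       (q * z^-1 - q^-1 * z) / ((q - q^-1) * (z - z^-1))
     else if [&& i == k, j == l & i != j] then
       - (q ^ (sgz (I - J))) / (q - q^-1)
     else if [&& l == i, k == j & i != k] then
       (z ^ (sgz (J - I))) / (z - z^-1)
     else if (Num.min I J < Kk < Num.max I J) && (I + J == Kk + L) then
       sgnC C (J - I)
     else 0).

(* K-matrix K^tr(lambda,r,s), expressed through z = e^{pi i lambda} *)
Definition Ktr (C : fieldType) (N : nat) (z r s : C) : endo1 C N :=
  fun j k =>
    let J := (j : nat)%:Z in let Kk := (k : nat)%:Z in
    let M := (N%:Z - 1 - J) in
    let sg := sgz (J * 2 - N%:Z + 1) in
    (s ^ (J - Kk)) *
    (if (j == k :> nat) && (J * 2 == N%:Z - 1) then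
       (r^-1 * z^-2 - r * z ^+ 2) / ((r - r^-1) * (z ^+ 2 - z^-2))
     else if (j == k :> nat) && (J * 2 != N%:Z - 1) then
       - ((z ^+ 2) ^ sg) / (z ^+ 2 - z^-2)
     else if (Kk == M) && (Kk != J) then
       - (r ^ sg) / (r - r^-1)
     else if Num.min J M < Kk < Num.max J M then
       sgnC C (N%:Z - 1 - J * 2)
     else 0).

(* Main.v *)
Require Import Defs.
From HB Require Import structures.
From mathcomp Require Import all_boot all_order all_algebra.
From mathcomp Require Import zify ring.
Import Order.TTheory GRing.Theory Num.Theory.
Local Open Scope ring_scope.

Section H.
Variable C : fieldType.

Lemma sum_delta N (F : nat -> C) m : (m < N)%N ->
  \sum_(l < N) ((l : nat) == m)%:R * F l = F m.
Proof.
move=> hm; rewrite (bigD1 (Ordinal hm)) //= eqxx mul1r big1 ?addr0 // => l hl.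
have -> : ((l : nat) == m) = false.
  by apply/negbTE; apply: contra hl => /eqP e; apply/eqP/val_inj.
by rewrite mul0r.
Qed.

Lemma sum_range N (F : nat -> C) a b : (b <= N)%N ->
  \sum_(k < N) (a < k < b)%N%:R * F k = \sum_(a.+1 <= k < b) F k.
Proof.
move=> hb.
case: (leqP b a.+1) => hab.
  rewrite [RHS]big_geq // big1 // => k _.
  by rewrite (_ : (a < k < b)%N = false) ?mul0r //; lia.
rewrite -(big_mkord xpredT (fun k => (a < k < b)%N%:R * F k)).
rewrite (big_cat_nat _ (n := a.+1)) //=; last by lia.
rewrite big_nat_cond big1 ?add0r; last first.
  by move=> k /andP [/andP [_ hk] _]; rewrite (_ : (a < k < b)%N = false) ?mul0r //; lia.
rewrite (big_cat_nat _ (n := b)) //=; last by lia.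
rewrite [X in _ + X]big_nat_cond [X in _ + X]big1 ?addr0; last first.
  by move=> k /andP [/andP [hk1 hk2] _]; rewrite (_ : (a < k < b)%N = false) ?mul0r //; lia.
rewrite big_nat_cond [RHS]big_nat_cond; apply: eq_bigr => k /andP [/andP [hk1 hk2] _].
by rewrite (_ : (a < k < b)%N = true) ?mul1r //; lia.
Qed.

Lemma Sgeo (x y : C) a b : (a < b)%N ->
  (y - x) * \sum_(a.+1 <= k < b) x ^+ k * y ^+ (a + b - k) =
  x ^+ a.+1 * y ^+ b - x ^+ b * y ^+ a.+1.
Proof.
move=> hab; elim: b hab => [//|b IH] hab.
case: (ltngtP a b) => h.
- rewrite big_nat_recr /=; last by lia.
  have -> : \sum_(a.+1 <= i < b) x ^+ i * y ^+ (a + b.+1 - i) =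
            y * \sum_(a.+1 <= i < b) x ^+ i * y ^+ (a + b - i).
    rewrite mulr_sumr big_nat_cond [RHS]big_nat_cond; apply: eq_bigr => k /andP [hk _].
    have -> : (a + b.+1 - k = (a + b - k).+1)%N by lia.
    by rewrite exprS; ring.
  have -> : (a + b.+1 - b = a.+1)%N by lia.
  rewrite mulrDr mulrA [(y - x) * y]mulrC -mulrA IH //.
  rewrite !exprS; ring.
- lia.
- subst b; rewrite big_geq //; rewrite mulr0; ring.
Qed.

Lemma sum2_delta N (F : nat -> nat -> C) a b : (a < N)%N -> (b < N)%N ->
  \sum_(k < N) \sum_(l < N) ((k == a :> nat) && (l == b :> nat))%:R * F k l = F a b.
Proof.
move=> ha hb.
rewrite -(@sum_delta N (fun k => F k b) a ha); apply: eq_bigr => k _.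
rewrite -(@sum_delta N (F k) b hb) mulr_sumr; apply: eq_bigr => l _.
by rewrite -mulnb natrM mulrA.
Qed.

Lemma sum2_anti N (F : nat -> nat -> C) a b : (a < N)%N -> (b < N)%N ->
  \sum_(k < N) \sum_(l < N) ((((minn a b < k < maxn a b) && (a + b == k + l))%N)%:R : C) * F k l
  = \sum_((minn a b).+1 <= k < maxn a b) F k (a + b - k)%N.
Proof.
move=> ha hb.
rewrite -(@sum_range N); last by lia.
apply: eq_bigr => k _.
case: (boolP (minn a b < k < maxn a b)%N) => hk; last first.
  by rewrite mul0r big1 // => l _; rewrite /= mul0r.
rewrite mul1r -(@sum_delta N (F k) (a + b - k)); last by lia.
apply: eq_bigr => l _ /=.
by rewrite (_ : (a + b == k + l)%N = ((l : nat) == a + b - k)%N) //; apply/idP/idP; lia.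
Qed.
End H.
Lemma cond4 (i j k l : nat) : ((Num.min (i%:Z) (j%:Z) < k%:Z < Num.max (i%:Z) (j%:Z)) && (i%:Z + j%:Z == k%:Z + l%:Z)) = ((minn i j < k < maxn i j) && (i + j == k + l))%N.
Proof. apply/idP/idP; lia. Qed.

Lemma R1E (C : fieldType) N (z q : C) (i j k l : 'I_N) :
  Rtr z q 1 i j k l =
  (if i == j :> nat then (q * z^-1 - q^-1 * z) / ((q - q^-1) * (z - z^-1))
   else - (q ^ (sgz ((i : nat)%:Z - (j : nat)%:Z))) / (q - q^-1)) * ((k == i :> nat) && (l == j :> nat))%:R
  + (z ^ (sgz ((j : nat)%:Z - (i : nat)%:Z))) / (z - z^-1) * [&& k == j :> nat, l == i :> nat & i != j :> nat]%:R
  + sgnC C ((j : nat)%:Z - (i : nat)%:Z) * ((minn i j < k < maxn i j) && (i + j == k + l))%N%:R.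
Proof.
rewrite /Rtr /= exp1rz mul1r cond4.
have E : forall (a b : 'I_N), (a == b) = (a == b :> nat) by [].
rewrite !E.
move: (nat_of_ord i) (nat_of_ord j) (nat_of_ord k) (nat_of_ord l) => {}i {}j {}k {}l.
case: ifP => h1; [|case: ifP => h2; [|case: ifP => h3; [|case: ifP => h4]]];
case: (boolP ((k == i) && (l == j))) => b1;
case: (boolP [&& k == j, l == i & i != j]) => b2;
case: (boolP ((minn i j < k < maxn i j) && (i + j == k + l))%N) => b3;
rewrite /= ?mulr1 ?mulr0 ?addr0 ?add0r //; try (exfalso; lia).
all: case: eqP => // ?; exfalso; lia.
Qed.
Lemma R1E' (C : fieldType) N (z q : C) (i j k l : 'I_N) (m : C) :
  Rtr z q 1 i j k l * m =
  ((k == i :> nat) && (l == j :> nat))%:R *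
    ((if i == j :> nat then (q * z^-1 - q^-1 * z) / ((q - q^-1) * (z - z^-1))
      else - (q ^ (sgz ((i : nat)%:Z - (j : nat)%:Z))) / (q - q^-1)) * m)
  + ((k == j :> nat) && (l == i :> nat))%:R *
    ((i != j :> nat)%:R * ((z ^ (sgz ((j : nat)%:Z - (i : nat)%:Z))) / (z - z^-1)) * m)
  + (((minn i j < k < maxn i j) && (i + j == k + l))%N)%:R *
    (sgnC C ((j : nat)%:Z - (i : nat)%:Z) * m).
Proof.
rewrite R1E; case: (i != j :> nat); rewrite ?andbT ?andbF /=; ring.
Qed.

Lemma rhoE (C : numFieldType) N (z q x y : C) (i j : 'I_N) :
  q != 0 -> q ^+ 2 != 1 -> z != 0 -> z ^+ 2 != 1 -> x != y ->
  \sum_(k < N) \sum_(l < N) Rtr z q 1 i j k l * (x ^+ k * y ^+ l) =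
  (- (q ^+ 2 - 1)^-1 + x / (y - x)) * (x ^+ i * y ^+ j)
  + (z ^+ 2 / (z ^+ 2 - 1) - y / (y - x)) * (x ^+ j * y ^+ i).
Proof.
move=> q0 q2 z0 z2 xy.
under eq_bigr do under eq_bigr do rewrite R1E'.
under eq_bigr do rewrite !big_split.
rewrite !big_split /=.
set A := (if _ then _ else _).
set B := (_%:R * _).
set D := sgnC _ _.
rewrite (@sum2_delta _ N (fun k l => A * (x ^+ k * y ^+ l))) //.
rewrite (@sum2_delta _ N (fun k l => B * (x ^+ k * y ^+ l))) //.
rewrite (@sum2_anti _ N (fun k l => D * (x ^+ k * y ^+ l))) //.
rewrite -mulr_sumr /A /B /D {A B D}.
have yx : y - x != 0 by rewrite subr_eq0 eq_sym.
case: (ltngtP i j) => h.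
-   have -> : \sum_(i.+1 <= k < j) x ^+ k * y ^+ (i + j - k) =
            (x ^+ i.+1 * y ^+ j - x ^+ j * y ^+ i.+1) / (y - x).
    by rewrite -(@Sgeo _ x y _ _ h) mulrC mulKf.
  have hs1 : sgz ((i : nat)%:Z - (j : nat)%:Z) = -1 by apply: ltr0_sgz; lia.
  have hs2 : sgz ((j : nat)%:Z - (i : nat)%:Z) = 1 by apply: gtr0_sgz; lia.
  rewrite hs1 /sgnC hs2 exprN1 expr1z /= !exprS.
  field.
  by rewrite ?yx ?q0 ?z0 -?expr2 ?subr_eq0 ?q2 ?z2.
- have -> : \sum_(j.+1 <= k < i) x ^+ k * y ^+ (i + j - k) =
            (x ^+ j.+1 * y ^+ i - x ^+ i * y ^+ j.+1) / (y - x).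
    rewrite -(@Sgeo _ x y _ _ h) mulrC mulKf //.
    by apply: eq_bigr => k _; rewrite addnC.
  have hs1 : sgz ((i : nat)%:Z - (j : nat)%:Z) = 1 by apply: gtr0_sgz; lia.
  have hs2 : sgz ((j : nat)%:Z - (i : nat)%:Z) = -1 by apply: ltr0_sgz; lia.
  rewrite hs1 /sgnC hs2 exprN1 expr1z /= !exprS.
  field.
  by rewrite ?yx ?q0 ?z0 -?expr2 ?subr_eq0 ?q2 ?z2.
- rewrite big_geq // mulr0 addr0 /= !mul0r h addr0.
  field.
  by rewrite ?yx ?q0 ?z0 -?expr2 ?subr_eq0 ?q2 ?z2.
Qed.
Lemma K1E (C : fieldType) N (z r : C) (j k : 'I_N) (m : C) :
  Ktr z r 1 j k * m =
  (k == j :> nat)%:R *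
    ((if (j * 2 + 1 == N)%N then (r^-1 * z^-2 - r * z ^+ 2) / ((r - r^-1) * (z ^+ 2 - z^-2))
      else - ((z ^+ 2) ^ (sgz ((j : nat)%:Z * 2 - N%:Z + 1))) / (z ^+ 2 - z^-2)) * m)
  + (((k == N - 1 - j :> nat) && (k != j :> nat))%N)%:R *
    (- (r ^ (sgz ((j : nat)%:Z * 2 - N%:Z + 1))) / (r - r^-1) * m)
  + ((minn j (N - 1 - j) < k < maxn j (N - 1 - j))%N)%:R *
    (sgnC C (N%:Z - 1 - (j : nat)%:Z * 2) * m).
Proof.
rewrite /Ktr /= exp1rz mul1r.
have E : forall (a b : 'I_N), (a == b) = (a == b :> nat) by [].
rewrite ?E.
have hj := ltn_ord j; have hk := ltn_ord k.
move: (nat_of_ord j) (nat_of_ord k) hj hk => {}j {}k hj hk.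
case: ifP => h1; [|case: ifP => h2; [|case: ifP => h3; [|case: ifP => h4]]];
case: (boolP (k == j)) => b1;
case: (boolP (k == N - 1 - j)%N) => b2;
case: (boolP (minn j (N - 1 - j) < k < maxn j (N - 1 - j))%N) => b3;
rewrite /= ?andbF ?andbT ?mulr1 ?mulr0 ?mulr1 ?mul1r ?mul0r ?addr0 ?add0r //; try (exfalso; lia).
all: try (case: ifP => // ?; exfalso; lia).
Qed.

Lemma kappaE (C : numFieldType) N (z r x : C) (j : 'I_N) :
  r != 0 -> r ^+ 2 != 1 -> z != 0 -> z ^+ 4 != 1 -> x != 1 ->
  \sum_(k < N) Ktr z r 1 j k * x ^+ k =
  (- (z ^+ 4 - 1)^-1 + x / (1 - x)) * x ^+ j
  + (- (r ^+ 2 - 1)^-1 - (1 - x)^-1) * x ^+ (N - 1 - j).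
Proof.
move=> r0 r2 z0 z4 x1.
have hj := ltn_ord j.
under eq_bigr do rewrite K1E.
rewrite !big_split /=.
set A := (if _ then _ else _).
set B := (- _ / _).
set D := sgnC _ _.
rewrite (@sum_delta _ N (fun k => A * x ^+ k)) //.
have -> : \sum_(i < N) ((i == (N - 1 - j)%N :> nat) && (i != j :> nat))%:R * (B * x ^+ i)
   = \sum_(i < N) (i == (N - 1 - j)%N :> nat)%:R * (((N - 1 - j)%N != j)%:R * B * x ^+ ((N - 1 - j)%N)).
  apply: eq_bigr => k _; case: (boolP (k == (N - 1 - j)%N :> nat)) => hk /=; last by rewrite !mul0r.
  by rewrite (eqP hk) /= !mul1r mulrA.
rewrite (@sum_delta _ N (fun k => ((N - 1 - j)%N != j)%:R * B * x ^+ ((N - 1 - j)%N))); last by lia.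
rewrite (@sum_range _ N (fun k => D * x ^+ k)); last by lia.
rewrite -mulr_sumr.
have Sg : forall a b, (a < b)%N -> \sum_(a.+1 <= k < b) x ^+ k = (x ^+ a.+1 - x ^+ b) / (1 - x).
  move=> a b hab; have := @Sgeo _ x 1 a b hab; rewrite !expr1n !mulr1 => <-.
  rewrite mulrC mulKf ?subr_eq0 1?eq_sym //.
  by apply: eq_bigr => k _; rewrite expr1n mulr1.
have x1' : 1 - x != 0 by rewrite subr_eq0 eq_sym.
have z4' : z * (z * (z * z)) != 1 by move: z4; rewrite !exprS expr0 mulr1.
rewrite /A /B /D {A B D}.
case: (ltngtP j ((N - 1 - j)%N)) => h.
- rewrite Sg //.
  have hs1 : sgz ((j : nat)%:Z * 2 - N%:Z + 1) = -1 by apply: ltr0_sgz; lia.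
  have hs2 : sgz (N%:Z - 1 - (j : nat)%:Z * 2) = 1 by apply: gtr0_sgz; lia.
  have hn : (j * 2 + 1 == N)%N = false by lia.
  have hn2 : ((N - 1 - j)%N != j)%N = true by lia.
  rewrite ?hn ?hn2 hs1 /sgnC hs2 !exprN1 /= !exprS.
  field.
  by rewrite ?x1' ?r0 ?z0 !subr_eq0 ?z4' -?expr2 ?r2.
- rewrite Sg //.
  have hs1 : sgz ((j : nat)%:Z * 2 - N%:Z + 1) = 1 by apply: gtr0_sgz; lia.
  have hs2 : sgz (N%:Z - 1 - (j : nat)%:Z * 2) = -1 by apply: ltr0_sgz; lia.
  have hn : (j * 2 + 1 == N)%N = false by lia.
  rewrite ?hn hs1 /sgnC hs2 !expr1z /= !exprS.
  field.
  by rewrite ?x1' ?r0 ?z0 !subr_eq0 ?z4' -?expr2 ?r2.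
- rewrite big_geq; last by lia.
  have hn : (j * 2 + 1 == N)%N = true by lia.
  rewrite hn /= mulr0 addr0 !mul0r addr0 -h.
  field.
  by rewrite ?x1' ?r0 ?z0 !subr_eq0 ?z4' -?expr2 ?r2.
Qed.

Set Implicit Arguments. Unset Strict Implicit.

Section G.
Variable C : numFieldType.
Variable N : nat.
Implicit Types u v : 'I_N -> 'I_N -> C.

Definition gen u (x y : C) := \sum_(i < N) \sum_(j < N) u i j * (x ^+ i * y ^+ j).
Definition app2 (A : endo2 C N) u := fun k l => \sum_(i < N) \sum_(j < N) u i j * A i j k l.

Lemma gen_ext u v : (forall i j, u i j = v i j) -> forall x y, gen u x y = gen v x y.
Proof. by move=> e x y; apply: eq_bigr => i _; apply: eq_bigr => j _; rewrite e. Qed.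


Lemma swap4 (F : 'I_N -> 'I_N -> 'I_N -> 'I_N -> C) :
  \sum_(a < N) \sum_(b < N) \sum_(c < N) \sum_(d < N) F a b c d =
  \sum_(c < N) \sum_(d < N) \sum_(a < N) \sum_(b < N) F a b c d.
Proof.
under eq_bigr do rewrite exchange_big.
rewrite exchange_big; apply: eq_bigr => c _.
under eq_bigr do rewrite exchange_big.
by rewrite exchange_big.
Qed.

Lemma app2_comp A B u k l : app2 (comp2 A B) u k l = app2 A (app2 B u) k l.
Proof.
rewrite /app2 /comp2.
under eq_bigr do under eq_bigr do rewrite mulr_sumr; under eq_bigr do under eq_bigr do under eq_bigr do rewrite mulr_sumr.
rewrite swap4; apply: eq_bigr => c _; apply: eq_bigr => d _.
rewrite mulr_suml; apply: eq_bigr => a _; rewrite mulr_suml; apply: eq_bigr => b _.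
by rewrite mulrA.
Qed.

Lemma gen_app A u x y : gen (app2 A u) x y =
  \sum_(i < N) \sum_(j < N) u i j * (\sum_(k < N) \sum_(l < N) A i j k l * (x ^+ k * y ^+ l)).
Proof.
rewrite /gen /app2.
under eq_bigr do under eq_bigr do rewrite mulr_suml; under eq_bigr do under eq_bigr do under eq_bigr do rewrite mulr_suml.
rewrite swap4; apply: eq_bigr => a _; apply: eq_bigr => b _.
rewrite mulr_sumr; apply: eq_bigr => c _; rewrite mulr_sumr; apply: eq_bigr => d _.
by rewrite -mulrA.
Qed.

Lemma sum_delta_ord (F : 'I_N -> C) (j : 'I_N) : \sum_(l < N) (l == j)%:R * F l = F j.
Proof.
rewrite (bigD1 j) //= eqxx mul1r big1 ?addr0 // => l /negbTE ->; by rewrite mul0r.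
Qed.

Lemma sum2_delta_ord (F : 'I_N -> 'I_N -> C) (c d : 'I_N) :
  \sum_(a < N) \sum_(b < N) ((a == c) && (b == d))%:R * F a b = F c d.
Proof.
rewrite -(sum_delta_ord (fun a => F a d) c); apply: eq_bigr => a _.
rewrite -(sum_delta_ord (F a) d) mulr_sumr; apply: eq_bigr => b _.
by rewrite -mulnb natrM mulrA.
Qed.

Lemma op21E (R : endo2 C N) i j k l : op21 R i j k l = R j i l k.
Proof.
rewrite /op21 /comp2 /flip2.
under eq_bigr do under eq_bigr do rewrite (sum2_delta_ord (fun a b => R a b _ _)).
rewrite -(sum2_delta_ord (R j i) l k).
apply: eq_bigr => a _; apply: eq_bigr => b _.
by rewrite mulrC andbC (eq_sym k) (eq_sym l).
Qed.

End G.


Section O.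
Variable C : numFieldType.

Definition cA (al : C) (x y : C) := al + x / (y - x).
Definition cB (be : C) (x y : C) := be - y / (y - x).
Definition cG (ga : C) (x : C) := ga + x / (1 - x).
Definition cD (dl : C) (x : C) := dl - (1 - x)^-1.
Definition ROp (al be : C) (f : C -> C -> C) x y :=
  cA al x y * f x y + cB be x y * f y x.
Definition R21Op al be (f : C -> C -> C) x y := ROp al be (fun a b => f b a) y x.
Definition K1Op (n : nat) (dl ga : C) (f : C -> C -> C) x y :=
  cG ga x * f x y + cD dl x * (x ^+ n * f x^-1 y).
Definition K2Op n dl ga (f : C -> C -> C) x y := K1Op n dl ga (fun a b => f b a) y x.

Variable N : nat.
Implicit Types u : 'I_N -> 'I_N -> C.

Lemma gen_R (Z q x y : C) u :
  q != 0 -> q ^+ 2 != 1 -> Z != 0 -> Z ^+ 2 != 1 -> x != y ->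
  gen (app2 (Rtr Z q 1) u) x y = ROp (- (q ^+ 2 - 1)^-1) (Z ^+ 2 / (Z ^+ 2 - 1)) (gen u) x y.
Proof.
move=> q0 q2 Z0 Z2 xy.
rewrite gen_app; under eq_bigr do under eq_bigr do rewrite rhoE //.
rewrite /ROp /cA /cB /gen !mulr_sumr -big_split; apply: eq_bigr => i _.
rewrite !mulr_sumr -big_split; apply: eq_bigr => j _.
rewrite /=; ring.
Qed.

Lemma gen_R21 (Z q x y : C) u :
  q != 0 -> q ^+ 2 != 1 -> Z != 0 -> Z ^+ 2 != 1 -> x != y ->
  gen (app2 (op21 (Rtr Z q 1)) u) x y = R21Op (- (q ^+ 2 - 1)^-1) (Z ^+ 2 / (Z ^+ 2 - 1)) (gen u) x y.
Proof.
move=> q0 q2 Z0 Z2 xy.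
rewrite gen_app.
have E : forall i j : 'I_N, \sum_(k < N) \sum_(l < N) op21 (Rtr Z q 1) i j k l * (x ^+ k * y ^+ l)
   = \sum_(k < N) \sum_(l < N) Rtr Z q 1 j i k l * (y ^+ k * x ^+ l).
  move=> i j; rewrite exchange_big; apply: eq_bigr => k _; apply: eq_bigr => l _.
  by rewrite op21E [x ^+ _ * _]mulrC.
have yx : y != x by rewrite eq_sym.
under eq_bigr do under eq_bigr do rewrite E rhoE //.
rewrite /R21Op /ROp /cA /cB /gen !mulr_sumr -big_split; apply: eq_bigr => i _.
rewrite !mulr_sumr -big_split; apply: eq_bigr => j _.
rewrite /=; ring.
Qed.

Lemma gen_K1 (Z r x y : C) u :
  r != 0 -> r ^+ 2 != 1 -> Z != 0 -> Z ^+ 4 != 1 -> x != 0 -> x != 1 ->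
  gen (app2 (K1 (Ktr Z r 1)) u) x y =
  K1Op (N - 1) (- (r ^+ 2 - 1)^-1) (- (Z ^+ 4 - 1)^-1) (gen u) x y.
Proof.
move=> r0 r2 Z0 Z4 x0 x1.
rewrite gen_app.
have E : forall i j : 'I_N, \sum_(k < N) \sum_(l < N) K1 (Ktr Z r 1) i j k l * (x ^+ k * y ^+ l)
   = (\sum_(k < N) Ktr Z r 1 i k * x ^+ k) * y ^+ j.
  move=> i j; rewrite mulr_suml; apply: eq_bigr => k _.
  rewrite /K1 -mulrA -(sum_delta_ord (fun l => Ktr Z r 1 i k * (x ^+ k * y ^+ l)) j).
  by apply: eq_bigr => l _; ring.
under eq_bigr do under eq_bigr do rewrite E kappaE //.
rewrite /K1Op /cG /cD /gen !mulr_sumr -big_split; apply: eq_bigr => i _.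
rewrite !mulr_sumr -big_split; apply: eq_bigr => j _.
have hi : (i <= N - 1)%N by have := ltn_ord i; lia.
rewrite /= exprVn (exprB hi) ?unitfE //.
ring.
Qed.

Lemma gen_K2 (Z r x y : C) u :
  r != 0 -> r ^+ 2 != 1 -> Z != 0 -> Z ^+ 4 != 1 -> y != 0 -> y != 1 ->
  gen (app2 (K2 (Ktr Z r 1)) u) x y =
  K2Op (N - 1) (- (r ^+ 2 - 1)^-1) (- (Z ^+ 4 - 1)^-1) (gen u) x y.
Proof.
move=> r0 r2 Z0 Z4 y0 y1.
rewrite gen_app.
have E : forall i j : 'I_N, \sum_(k < N) \sum_(l < N) K2 (Ktr Z r 1) i j k l * (x ^+ k * y ^+ l)
   = x ^+ i * (\sum_(l < N) Ktr Z r 1 j l * y ^+ l).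
  move=> i j; rewrite /K2 -(sum_delta_ord (fun k => x ^+ k * (\sum_(l < N) Ktr Z r 1 j l * y ^+ l)) i).
  apply: eq_bigr => k _; rewrite !mulr_sumr; apply: eq_bigr => l _; ring.
under eq_bigr do under eq_bigr do rewrite E kappaE //.
rewrite /K2Op /K1Op /cG /cD /gen !mulr_sumr -big_split; apply: eq_bigr => i _.
rewrite !mulr_sumr -big_split; apply: eq_bigr => j _.
have hj : (j <= N - 1)%N by have := ltn_ord j; lia.
rewrite /= exprVn (exprB hj) ?unitfE //.
ring.
Qed.

End O.


Section P.
Variable C : numFieldType.

Definition good (x y : C) := x != 0 /\ y != 0 /\ x != 1 /\ y != 1 /\ x != y /\ x * y != 1.

Lemma good_sym x y : good x y -> good y x.
Proof. by case=> [? [? [? [? [? ?]]]]]; rewrite /good (eq_sym y x) (mulrC y x). Qed.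

Lemma good_invl x y : good x y -> good x^-1 y.
Proof.
case=> [x0 [y0 [x1 [y1 [xy xy1]]]]]; do !split => //.
- by rewrite invr_eq0.
- by rewrite invr_eq1.
- apply: contra xy1 => /eqP <-; by rewrite mulfV.
- apply: contra xy => /eqP e; apply/eqP.
  by have := congr1 (fun t => x * t) e; rewrite /= mulrA mulfV // mul1r mulr1 => ->.
Qed.

Lemma good_invr x y : good x y -> good x y^-1.
Proof. by move=> g; apply: good_sym; apply: good_invl; apply: good_sym. Qed.

Definition agree (F G : C -> C -> C) := forall x y, good x y -> F x y = G x y.

Lemma agree_trans F G H : agree F G -> agree G H -> agree F H.
Proof. by move=> h1 h2 x y g; rewrite h1 // h2. Qed.

Lemma ROp_ext al be F G : agree F G -> agree (ROp al be F) (ROp al be G).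
Proof. by move=> h x y g; rewrite /ROp !h //; apply: good_sym. Qed.
Lemma R21Op_ext al be F G : agree F G -> agree (R21Op al be F) (R21Op al be G).
Proof. by move=> h x y g; rewrite /R21Op /ROp !h //; apply: good_sym. Qed.
Lemma K1Op_ext n dl ga F G : agree F G -> agree (K1Op n dl ga F) (K1Op n dl ga G).
Proof. by move=> h x y g; rewrite /K1Op !h //; apply: good_invl. Qed.
Lemma K2Op_ext n dl ga F G : agree F G -> agree (K2Op n dl ga F) (K2Op n dl ga G).
Proof. by move=> h x y g; rewrite /K2Op /K1Op !h //; apply: good_invr. Qed.

Lemma abstractRE (al dl a c b1 b2 g1 g2 : C) n f x y : good x y ->
  a != 0 -> c != 0 -> a != c -> a * c != 1 -> a ^+ 2 != 1 -> c ^+ 2 != 1 ->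
  b1 = a / c / (a / c - 1) -> b2 = a * c / (a * c - 1) ->
  g1 = - (a ^+ 2 - 1)^-1 -> g2 = - (c ^+ 2 - 1)^-1 ->
  ROp al b1 (K1Op n dl g1 (R21Op al b2 (K2Op n dl g2 f))) x y =
  K2Op n dl g2 (ROp al b2 (K1Op n dl g1 (R21Op al b1 f))) x y.
Proof.
case=> [x0 [y0 [x1 [y1 [xy xy1]]]]] a0 c0 ac ac1 a2 c2 hb1 hb2 hg1 hg2.
rewrite /ROp /K1Op /R21Op /K2Op /ROp /K1Op.
rewrite ?invrK ?exprVn.
have X0 : x ^+ n != 0 by rewrite expf_neq0.
have Y0 : y ^+ n != 0 by rewrite expf_neq0.
set X := x ^+ n in X0 *. set Y := y ^+ n in Y0 *.
transitivity (((cA al x y * cG g1 x * cA al y x * cG g2 y) + (cB b1 x y * cG g1 y * cB b2 x y * cG g2 y) + (cB b1 x y * cD dl y * Y * cB b2 x (y^-1) * cD dl (y^-1) * Y^-1)) * f x y + ((cA al x y * cG g1 x * cA al y x * cD dl y * Y) + (cB b1 x y * cG g1 y * cB b2 x y * cD dl y * Y) + (cB b1 x y * cD dl y * Y * cB b2 x (y^-1) * cG g2 (y^-1))) * f x (y^-1) + ((cA al x y * cD dl x * X * cA al y (x^-1) * cG g2 y)) * f (x^-1) y + ((cA al x y * cD dl x * X * cA al y (x^-1) * cD dl y * Y)) * f (x^-1) (y^-1) + ((cA al x y * cG g1 x * cB b2 y x * cG g2 x) + (cA al x y * cD dl x * X * cB b2 y (x^-1) * cD dl (x^-1) * X^-1)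 + (cB b1 x y * cG g1 y * cA al x y * cG g2 x)) * f y x + ((cA al x y * cG g1 x * cB b2 y x * cD dl x * X) + (cA al x y * cD dl x * X * cB b2 y (x^-1) * cG g2 (x^-1)) + (cB b1 x y * cG g1 y * cA al x y * cD dl x * X)) * f y (x^-1) + ((cB b1 x y * cD dl y * Y * cA al x (y^-1) * cG g2 x)) * f (y^-1) x + ((cB b1 x y * cD dl y * Y * cA al x (y^-1) * cD dl x * X)) * f (y^-1) (x^-1)).
  rewrite /=. ring.
transitivity (((cG g2 y * cA al x y * cG g1 x * cA al y x) + (cG g2 y * cB b2 x y * cG g1 y * cB b1 x y) + (cD dl y * Y * cB b2 x (y^-1) * cD dl (y^-1) * Y^-1 * cB b1 x y)) * f x y + ((cG g2 y * cB b2 x y * cD dl y * Y * cB b1 x (y^-1)) + (cD dl y * Y * cA al x (y^-1) * cG g1 x * cA al (y^-1) x) + (cD dl y * Y * cB b2 x (y^-1) * cG g1 (y^-1) * cB b1 x (y^-1))) * f x (y^-1) + ((cG g2 y * cA al x y * cD dl x * X * cA al y (x^-1))) * f (x^-1) y + ((cD dl y * Y * cA al x (y^-1) * cD dl x * X * cA al (y^-1) (x^-1))) * f (x^-1) (y^-1) + ((cG g2 y * cA al x y * cG g1 x * cB b1 y x) + (cG g2 y * cB b2 x y * cG g1 y * cA al x y) + (cD dl y * Y * cB b2 x (y^-1) * cD dl (y^-1) * Y^-1 * cA al x y)) * f y x + ((cG g2 y * cA al x y * cD dl x * X * cB b1 y (x^-1))) * f y (x^-1) + ((cG g2 y * cB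 b2 x y * cD dl y * Y * cA al x (y^-1)) + (cD dl y * Y * cA al x (y^-1) * cG g1 x * cB b1 (y^-1) x) + (cD dl y * Y * cB b2 x (y^-1) * cG g1 (y^-1) * cA al x (y^-1))) * f (y^-1) x + ((cD dl y * Y * cA al x (y^-1) * cD dl x * X * cB b1 (y^-1) (x^-1))) * f (y^-1) (x^-1)); last first.
  rewrite /=. ring.
have e0 : (cA al x y * cG g1 x * cA al y x * cG g2 y) + (cB b1 x y * cG g1 y * cB b2 x y * cG g2 y) + (cB b1 x y * cD dl y * Y * cB b2 x (y^-1) * cD dl (y^-1) * Y^-1) = (cG g2 y * cA al x y * cG g1 x * cA al y x) + (cG g2 y * cB b2 x y * cG g1 y * cB b1 x y) + (cD dl y * Y * cB b2 x (y^-1) * cD dl (y^-1) * Y^-1 * cB b1 x y).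
  rewrite /cA /cB /cG /cD ?hb1 ?hb2 ?hg1 ?hg2; field.
  by rewrite ?mulN1r ?mulNr ?subr_eq0 ?(eq_sym 1) ?(eq_sym y x) ?(mulrC y x) ?X0 ?Y0 ?x0 ?y0 ?x1 ?y1 ?xy ?xy1 ?a0 ?c0 ?ac ?ac1 ?a2 ?c2.
have e1 : (cA al x y * cG g1 x * cA al y x * cD dl y * Y) + (cB b1 x y * cG g1 y * cB b2 x y * cD dl y * Y) + (cB b1 x y * cD dl y * Y * cB b2 x (y^-1) * cG g2 (y^-1)) = (cG g2 y * cB b2 x y * cD dl y * Y * cB b1 x (y^-1)) + (cD dl y * Y * cA al x (y^-1) * cG g1 x * cA al (y^-1) x) + (cD dl y * Y * cB b2 x (y^-1) * cG g1 (y^-1) * cB b1 x (y^-1)).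
  rewrite /cA /cB /cG /cD ?hb1 ?hb2 ?hg1 ?hg2; field.
  by rewrite ?mulN1r ?mulNr ?subr_eq0 ?(eq_sym 1) ?(eq_sym y x) ?(mulrC y x) ?X0 ?Y0 ?x0 ?y0 ?x1 ?y1 ?xy ?xy1 ?a0 ?c0 ?ac ?ac1 ?a2 ?c2.
have e2 : (cA al x y * cD dl x * X * cA al y (x^-1) * cG g2 y) = (cG g2 y * cA al x y * cD dl x * X * cA al y (x^-1)).
  rewrite /cA /cB /cG /cD ?hb1 ?hb2 ?hg1 ?hg2; field.
  by rewrite ?mulN1r ?mulNr ?subr_eq0 ?(eq_sym 1) ?(eq_sym y x) ?(mulrC y x) ?X0 ?Y0 ?x0 ?y0 ?x1 ?y1 ?xy ?xy1 ?a0 ?c0 ?ac ?ac1 ?a2 ?c2.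
have e3 : (cA al x y * cD dl x * X * cA al y (x^-1) * cD dl y * Y) = (cD dl y * Y * cA al x (y^-1) * cD dl x * X * cA al (y^-1) (x^-1)).
  rewrite /cA /cB /cG /cD ?hb1 ?hb2 ?hg1 ?hg2; field.
  by rewrite ?mulN1r ?mulNr ?subr_eq0 ?(eq_sym 1) ?(eq_sym y x) ?(mulrC y x) ?X0 ?Y0 ?x0 ?y0 ?x1 ?y1 ?xy ?xy1 ?a0 ?c0 ?ac ?ac1 ?a2 ?c2.
have e4 : (cA al x y * cG g1 x * cB b2 y x * cG g2 x) + (cA al x y * cD dl x * X * cB b2 y (x^-1) * cD dl (x^-1) * X^-1) + (cB b1 x y * cG g1 y * cA al x y * cG g2 x) = (cG g2 y * cA al x y * cG g1 x * cB b1 y x) + (cG g2 y * cB b2 x y * cG g1 y * cA al x y) + (cD dl y * Y * cB b2 x (y^-1) * cD dl (y^-1) * Y^-1 * cA al x y).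
  rewrite /cA /cB /cG /cD ?hb1 ?hb2 ?hg1 ?hg2; field.
  by rewrite ?mulN1r ?mulNr ?subr_eq0 ?(eq_sym 1) ?(eq_sym y x) ?(mulrC y x) ?X0 ?Y0 ?x0 ?y0 ?x1 ?y1 ?xy ?xy1 ?a0 ?c0 ?ac ?ac1 ?a2 ?c2.
have e5 : (cA al x y * cG g1 x * cB b2 y x * cD dl x * X) + (cA al x y * cD dl x * X * cB b2 y (x^-1) * cG g2 (x^-1)) + (cB b1 x y * cG g1 y * cA al x y * cD dl x * X) = (cG g2 y * cA al x y * cD dl x * X * cB b1 y (x^-1)).
  rewrite /cA /cB /cG /cD ?hb1 ?hb2 ?hg1 ?hg2; field.
  by rewrite ?mulN1r ?mulNr ?subr_eq0 ?(eq_sym 1) ?(eq_sym y x) ?(mulrC y x) ?X0 ?Y0 ?x0 ?y0 ?x1 ?y1 ?xy ?xy1 ?a0 ?c0 ?ac ?ac1 ?a2 ?c2.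
have e6 : (cB b1 x y * cD dl y * Y * cA al x (y^-1) * cG g2 x) = (cG g2 y * cB b2 x y * cD dl y * Y * cA al x (y^-1)) + (cD dl y * Y * cA al x (y^-1) * cG g1 x * cB b1 (y^-1) x) + (cD dl y * Y * cB b2 x (y^-1) * cG g1 (y^-1) * cA al x (y^-1)).
  rewrite /cA /cB /cG /cD ?hb1 ?hb2 ?hg1 ?hg2; field.
  by rewrite ?mulN1r ?mulNr ?subr_eq0 ?(eq_sym 1) ?(eq_sym y x) ?(mulrC y x) ?X0 ?Y0 ?x0 ?y0 ?x1 ?y1 ?xy ?xy1 ?a0 ?c0 ?ac ?ac1 ?a2 ?c2.
have e7 : (cB b1 x y * cD dl y * Y * cA al x (y^-1) * cD dl x * X) = (cD dl y * Y * cA al x (y^-1) * cD dl x * X * cB b1 (y^-1) (x^-1)).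
  rewrite /cA /cB /cG /cD ?hb1 ?hb2 ?hg1 ?hg2; field.
  by rewrite ?mulN1r ?mulNr ?subr_eq0 ?(eq_sym 1) ?(eq_sym y x) ?(mulrC y x) ?X0 ?Y0 ?x0 ?y0 ?x1 ?y1 ?xy ?xy1 ?a0 ?c0 ?ac ?ac1 ?a2 ?c2.
by rewrite e0 e1 e2 e3 e4 e5 e6 e7.
Qed.
End P.


Section Q.
Variable C : numFieldType.

Lemma vanish1 N (c : 'I_N -> C) (t : nat -> C) :
  (forall a b, (a < N)%N -> (b < N)%N -> t a = t b -> a = b) ->
  (forall a, (a < N)%N -> \sum_(k < N) c k * t a ^+ k = 0) -> forall k, c k = 0.
Proof.
move=> tinj h k.
pose E := fun n : nat => if insub n is Some o then c o else 0.
have EE : forall o : 'I_N, E o = c o by move=> o; rewrite /E valK.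
pose P := \poly_(n < N) E n.
have P0 : P = 0.
  apply/eqP; apply: contraT => nz.
  have := max_poly_roots nz (rs := mkseq t N).
  rewrite size_mkseq => H.
  have : (N < size P)%N.
    apply: H.
    - apply/allP => v /mapP [a]; rewrite mem_iota add0n => /andP [_ ha] ->.
      rewrite /root horner_poly; apply/eqP; rewrite -[RHS](h a ha).
      by apply: eq_bigr => o _; rewrite EE.
    - rewrite map_inj_in_uniq ?iota_uniq // => a b; rewrite !mem_iota !add0n => /andP [_ ha] /andP [_ hb].
      exact: tinj.
  by have := size_poly N E; rewrite -/P; lia.
by have := congr1 (fun p : {poly C} => p`_k) P0; rewrite coef_poly ltn_ord EE coef0.
Qed.

Lemma gen_inj N (v w : 'I_N -> 'I_N -> C) :
  (forall x y, good x y -> gen v x y = gen w x y) -> forall k l, v k l = w k l.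
Proof.
move=> h k l; apply/eqP; rewrite -subr_eq0; apply/eqP.
pose d := fun a b => v a b - w a b.
have hd : forall x y, good x y -> \sum_(a < N) (\sum_(b < N) d a b * y ^+ b) * x ^+ a = 0.
  move=> x y g; have := h x y g; move/eqP; rewrite -subr_eq0 => /eqP E.
  rewrite -[RHS]E /gen -sumrB.
  apply: eq_bigr => a _; rewrite mulr_suml -sumrB; apply: eq_bigr => b _; rewrite /d; ring.
pose t := fun n : nat => (n + 2)%:R : C.
pose s := fun n : nat => (N + 2 + n)%:R : C.
have gts : forall a b, (a < N)%N -> good (t a) (s b).
  move=> a b ha; rewrite /good /t /s -natrM !pnatr_eq0 !pnatr_eq1 !eqr_nat; do !split; lia.
have tinj : forall a b, (a < N)%N -> (b < N)%N -> t a = t b -> a = b.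
  by move=> a b _ _ /eqP; rewrite /t eqr_nat; lia.
have sinj : forall a b, (a < N)%N -> (b < N)%N -> s a = s b -> a = b.
  by move=> a b _ _ /eqP; rewrite /s eqr_nat; lia.
have h1 : forall b, (b < N)%N -> forall a : 'I_N, \sum_(l0 < N) d a l0 * s b ^+ l0 = 0.
  move=> b hb; apply: (@vanish1 N (fun a => \sum_(l0 < N) d a l0 * s b ^+ l0) t tinj).
  by move=> a ha; apply: hd; apply: gts.
exact: (@vanish1 N (d k) s sinj (fun b hb => h1 b hb k)).
Qed.

Lemma app2_delta N (M : endo2 C N) (i j k l : 'I_N) :
  app2 M (fun a b => ((a == i) && (b == j))%:R) k l = M i j k l.
Proof. by rewrite /app2 (sum2_delta_ord (fun a b => M a b k l)). Qed.

End Q.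


Lemma gen_comp4 (C : numFieldType) N (A B C0 D : endo2 C N) u x y :
  gen (app2 (comp2 (comp2 (comp2 A B) C0) D) u) x y = gen (app2 A (app2 B (app2 C0 (app2 D u)))) x y.
Proof. by apply: gen_ext => a b; rewrite !app2_comp. Qed.

Lemma RE1 (C : numFieldType) N (q r z w : C) :
  q != 0 -> r != 0 -> q ^+ 2 != 1 -> r ^+ 2 != 1 -> z != 0 -> w != 0 ->
  (z / w) ^+ 2 != 1 -> (z * w) ^+ 2 != 1 -> z ^+ 4 != 1 -> w ^+ 4 != 1 ->
  forall i j k l : 'I_N,
    comp2 (comp2 (comp2 (Rtr (z / w) q 1) (K1 (Ktr z r 1)))
                 (op21 (Rtr (z * w) q 1))) (K2 (Ktr w r 1)) i j k l
    = comp2 (comp2 (comp2 (K2 (Ktr w r 1)) (Rtr (z * w) q 1))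
                   (K1 (Ktr z r 1))) (op21 (Rtr (z / w) q 1)) i j k l.
Proof.
move=> q0 r0 q2 r2 z0 w0 zw1 zw2 z4 w4 i j k l.
set u := fun a b : 'I_N => ((a == i) && (b == j))%:R : C.
rewrite -!(app2_delta _ i j k l) -/u.
move: k l; apply: gen_inj => x y g.
have zw0 : z / w != 0 by rewrite mulf_neq0 ?invr_eq0.
have zw0' : z * w != 0 by rewrite mulf_neq0.
set al := - (q ^+ 2 - 1)^-1.
set dl := - (r ^+ 2 - 1)^-1.
have aR : forall Z (v : 'I_N -> 'I_N -> C), Z != 0 -> Z ^+ 2 != 1 ->
   agree (gen (app2 (Rtr Z q 1) v)) (ROp al (Z ^+ 2 / (Z ^+ 2 - 1)) (gen v)).
  by move=> Z v Z0 Z2 a b [_ [_ [_ [_ [ab _]]]]]; apply: gen_R.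
have aR21 : forall Z (v : 'I_N -> 'I_N -> C), Z != 0 -> Z ^+ 2 != 1 ->
   agree (gen (app2 (op21 (Rtr Z q 1)) v)) (R21Op al (Z ^+ 2 / (Z ^+ 2 - 1)) (gen v)).
  by move=> Z v Z0 Z2 a b [_ [_ [_ [_ [ab _]]]]]; apply: gen_R21.
have aK1 : forall Z (v : 'I_N -> 'I_N -> C), Z != 0 -> Z ^+ 4 != 1 ->
   agree (gen (app2 (K1 (Ktr Z r 1)) v)) (K1Op (N - 1) dl (- (Z ^+ 4 - 1)^-1) (gen v)).
  by move=> Z v Z0 Z4 a b [a0 [_ [a1 _]]]; apply: gen_K1.
have aK2 : forall Z (v : 'I_N -> 'I_N -> C), Z != 0 -> Z ^+ 4 != 1 ->
   agree (gen (app2 (K2 (Ktr Z r 1)) v)) (K2Op (N - 1) dl (- (Z ^+ 4 - 1)^-1) (gen v)).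
  by move=> Z v Z0 Z4 a b [_ [b0 [_ [b1 _]]]]; apply: gen_K2.
rewrite !gen_comp4.
rewrite (_ : gen _ x y = ROp al ((z / w) ^+ 2 / ((z / w) ^+ 2 - 1)) (K1Op (N - 1) dl (- (z ^+ 4 - 1)^-1)
     (R21Op al ((z * w) ^+ 2 / ((z * w) ^+ 2 - 1)) (K2Op (N - 1) dl (- (w ^+ 4 - 1)^-1) (gen u)))) x y); last first.
  move: x y g; apply: agree_trans (aR _ _ zw0 zw1) _; apply: ROp_ext.
  apply: agree_trans (aK1 _ _ z0 z4) _; apply: K1Op_ext.
  apply: agree_trans (aR21 _ _ zw0' zw2) _; apply: R21Op_ext.
  exact: aK2.
rewrite (_ : gen _ x y = K2Op (N - 1) dl (- (w ^+ 4 - 1)^-1) (ROp al ((z * w) ^+ 2 / ((z * w) ^+ 2 - 1))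
     (K1Op (N - 1) dl (- (z ^+ 4 - 1)^-1) (R21Op al ((z / w) ^+ 2 / ((z / w) ^+ 2 - 1)) (gen u)))) x y); last first.
  move: x y g; apply: agree_trans (aK2 _ _ w0 w4) _; apply: K2Op_ext.
  apply: agree_trans (aR _ _ zw0' zw2) _; apply: ROp_ext.
  apply: agree_trans (aK1 _ _ z0 z4) _; apply: K1Op_ext.
  exact: aR21.
have E4 : forall t : C, t ^+ 4 = (t ^+ 2) ^+ 2 by move=> t; rewrite -exprM.
rewrite expr_div_n exprMn !E4.
apply: abstractRE => //.
- by rewrite expf_neq0.
- by rewrite expf_neq0.
- by apply: contra zw1 => /eqP e; rewrite expr_div_n e divff // expf_neq0.
- by rewrite -exprMn.
- by rewrite -E4.
- by rewrite -E4.
Qed.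


Section S.
Variable C : numFieldType.
Variable N : nat.

Lemma Rsc (z q p : C) (i j k l : 'I_N) :
  Rtr z q p i j k l = p ^ (((j : nat)%:Z - (k : nat)%:Z) * 2) * Rtr z q 1 i j k l.
Proof. by rewrite /Rtr exp1rz mul1r. Qed.

Lemma Ksc (z r s : C) (j k : 'I_N) :
  Ktr z r s j k = s ^ ((j : nat)%:Z - (k : nat)%:Z) * Ktr z r 1 j k.
Proof. by rewrite /Ktr exp1rz mul1r. Qed.

Lemma R1supp (z q : C) (i j k l : 'I_N) : Rtr z q 1 i j k l != 0 -> (i + j = k + l)%N.
Proof.
move=> nz; apply/eqP; apply: contraNT nz => h.
rewrite R1E.
rewrite (_ : ((k == i :> nat) && (l == j :> nat)) = false); last by lia.
rewrite (_ : [&& k == j :> nat, l == i :> nat & i != j :> nat] = false); last by lia.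
rewrite (_ : ((minn i j < k < maxn i j) && (i + j == k + l))%N = false); last by lia.
by rewrite !mulr0 !addr0.
Qed.

Lemma termL (p s q r z w Z1 Z2 : C) (i j m n a b c d e f : 'I_N) : p != 0 -> s != 0 ->
  K2 (Ktr w r s) i j a b * (op21 (Rtr Z2 q p) a b c d * (K1 (Ktr z r s) c d e f * Rtr Z1 q p e f m n)) =
  p ^ (((i : nat)%:Z - (m : nat)%:Z) * 2) * s ^ ((i : nat)%:Z + (j : nat)%:Z - (m : nat)%:Z - (n : nat)%:Z) *
  (K2 (Ktr w r 1) i j a b * (op21 (Rtr Z2 q 1) a b c d * (K1 (Ktr z r 1) c d e f * Rtr Z1 q 1 e f m n))).
Proof.
move=> p0 s0.
rewrite /K2 /K1 !op21E (Rsc Z1 q p) (Rsc Z2 q p) (Ksc w r s) (Ksc z r s).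
have E : forall (a b : 'I_N), (a == b) = (a == b :> nat) by [].
rewrite !E.
case: (boolP (a == i :> nat)) => hai; last by rewrite /=; ring.
case: (boolP (f == d :> nat)) => hfd; last by rewrite /=; ring.
case: (eqVneq (Rtr Z2 q 1 b a d c) 0) => h1; first by rewrite h1; ring.
case: (eqVneq (Rtr Z1 q 1 e f m n) 0) => h2; first by rewrite h2; ring.
have s1 := R1supp h1; have s2 := R1supp h2.
have Hp : p ^ (((a : nat)%:Z - (d : nat)%:Z) * 2) * p ^ (((f : nat)%:Z - (m : nat)%:Z) * 2)
          = p ^ (((i : nat)%:Z - (m : nat)%:Z) * 2).
  rewrite -expfzDr //; congr (_ ^ _); lia.
have Hs : s ^ ((j : nat)%:Z - (b : nat)%:Z) * s ^ ((c : nat)%:Z - (e : nat)%:Z)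
          = s ^ ((i : nat)%:Z + (j : nat)%:Z - (m : nat)%:Z - (n : nat)%:Z).
  rewrite -expfzDr //; congr (_ ^ _); lia.
rewrite -Hp -Hs /=; ring.
Qed.

Lemma termR (p s q r z w Z1 Z2 : C) (i j m n a b c d e f : 'I_N) : p != 0 -> s != 0 ->
  op21 (Rtr Z1 q p) i j a b * (K1 (Ktr z r s) a b c d * (Rtr Z2 q p c d e f * K2 (Ktr w r s) e f m n)) =
  p ^ (((i : nat)%:Z - (m : nat)%:Z) * 2) * s ^ ((i : nat)%:Z + (j : nat)%:Z - (m : nat)%:Z - (n : nat)%:Z) *
  (op21 (Rtr Z1 q 1) i j a b * (K1 (Ktr z r 1) a b c d * (Rtr Z2 q 1 c d e f * K2 (Ktr w r 1) e f m n))).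
Proof.
move=> p0 s0.
rewrite /K2 /K1 !op21E (Rsc Z1 q p) (Rsc Z2 q p) (Ksc w r s) (Ksc z r s).
have E : forall (a b : 'I_N), (a == b) = (a == b :> nat) by [].
rewrite !E.
case: (boolP (d == b :> nat)) => hdb; last by rewrite /=; ring.
case: (boolP (m == e :> nat)) => hme; last by rewrite /=; ring.
case: (eqVneq (Rtr Z1 q 1 j i b a) 0) => h1; first by rewrite h1; ring.
case: (eqVneq (Rtr Z2 q 1 c d e f) 0) => h2; first by rewrite h2; ring.
have s1 := R1supp h1; have s2 := R1supp h2.
have Hp : p ^ (((i : nat)%:Z - (b : nat)%:Z) * 2) * p ^ (((d : nat)%:Z - (e : nat)%:Z) * 2)
          = p ^ (((i : nat)%:Z - (m : nat)%:Z) * 2).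
  rewrite -expfzDr //; congr (_ ^ _); lia.
have Hs : s ^ ((a : nat)%:Z - (c : nat)%:Z) * s ^ ((f : nat)%:Z - (n : nat)%:Z)
          = s ^ ((i : nat)%:Z + (j : nat)%:Z - (m : nat)%:Z - (n : nat)%:Z).
  rewrite -expfzDr //; congr (_ ^ _); lia.
rewrite -Hp -Hs /=; ring.
Qed.
End S.


Lemma LHSsc (C : numFieldType) N (p s q r z w Z1 Z2 : C) (i j m n : 'I_N) : p != 0 -> s != 0 ->
  comp2 (comp2 (comp2 (Rtr Z1 q p) (K1 (Ktr z r s))) (op21 (Rtr Z2 q p))) (K2 (Ktr w r s)) i j m n =
  p ^ (((i : nat)%:Z - (m : nat)%:Z) * 2) * s ^ ((i : nat)%:Z + (j : nat)%:Z - (m : nat)%:Z - (n : nat)%:Z) *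
  comp2 (comp2 (comp2 (Rtr Z1 q 1) (K1 (Ktr z r 1))) (op21 (Rtr Z2 q 1))) (K2 (Ktr w r 1)) i j m n.
Proof.
move=> p0 s0; rewrite /comp2.
rewrite mulr_sumr; apply: eq_bigr => a _; rewrite mulr_sumr; apply: eq_bigr => b _.
rewrite !mulr_sumr; apply: eq_bigr => c _; rewrite !mulr_sumr; apply: eq_bigr => d _.
rewrite !mulr_sumr; apply: eq_bigr => e _; rewrite !mulr_sumr; apply: eq_bigr => f _.
exact: termL.
Qed.

Lemma RHSsc (C : numFieldType) N (p s q r z w Z1 Z2 : C) (i j m n : 'I_N) : p != 0 -> s != 0 ->
  comp2 (comp2 (comp2 (K2 (Ktr w r s)) (Rtr Z2 q p)) (K1 (Ktr z r s))) (op21 (Rtr Z1 q p)) i j m n =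
  p ^ (((i : nat)%:Z - (m : nat)%:Z) * 2) * s ^ ((i : nat)%:Z + (j : nat)%:Z - (m : nat)%:Z - (n : nat)%:Z) *
  comp2 (comp2 (comp2 (K2 (Ktr w r 1)) (Rtr Z2 q 1)) (K1 (Ktr z r 1))) (op21 (Rtr Z1 q 1)) i j m n.
Proof.
move=> p0 s0; rewrite /comp2.
rewrite mulr_sumr; apply: eq_bigr => a _; rewrite mulr_sumr; apply: eq_bigr => b _.
rewrite !mulr_sumr; apply: eq_bigr => c _; rewrite !mulr_sumr; apply: eq_bigr => d _.
rewrite !mulr_sumr; apply: eq_bigr => e _; rewrite !mulr_sumr; apply: eq_bigr => f _.
exact: termR.
Qed.

Unset Implicit Arguments.
Theorem mainTheorem5 (C : numClosedFieldType) (N : nat) (q p r s z w : C) :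
  (1 <= N)%N ->
  q != 0 -> p != 0 -> r != 0 -> s != 0 ->
  q ^+ 2 != 1 -> r ^+ 2 != 1 ->
  z != 0 -> w != 0 ->
  (z / w) ^+ 2 != 1 -> (z * w) ^+ 2 != 1 -> z ^+ 4 != 1 -> w ^+ 4 != 1 ->
  let R := @Rtr C N in
  let K := @Ktr C N in
  forall i j k l : 'I_N,
    comp2 (comp2 (comp2 (R (z / w) q p) (K1 (K z r s)))
                 (op21 (R (z * w) q p))) (K2 (K w r s)) i j k l
    = comp2 (comp2 (comp2 (K2 (K w r s)) (R (z * w) q p))
                   (K1 (K z r s))) (op21 (R (z / w) q p)) i j k l.
Proof.
move=> N1 q0 p0 r0 s0 q2 r2 z0 w0 zw1 zw2 z4 w4 R K i j k l.
rewrite /R /K LHSsc // RHSsc //.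
by rewrite (RE1 q0 r0 q2 r2 z0 w0 zw1 zw2 z4 w4).
Qed.
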